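(* Let $\mathcal{A}$ be a finite set of positive integers, let $w \leqslant z$ be real numbers, let $0 < m_0 \leqslant 1$, and let $m_1, m_2, m_3, m_4$ be real numbers with $(m_1, m_2) \in \mathcal{U}$ and $(m_3, m_4) \in \mathcal{U}$. Writing $N^r_5 = \sum_{0 \leqslant i_1 < \cdots < i_r \leqslant 4} m_{i_1}\cdots m_{i_r}$ and $Q = m_0m_1m_2m_3m_4$, we have $$ S(\mathcal{A}, z) \geqslant S(\mathcal{A}, w) - \frac{N^4_5 - N^3_5 + N^2_5 - N^1_5 + 1}{Q} \sum_{w \leqslant p_1 < z} S(\mathcal{A}_{p_1}, w) + \frac{2(N^3_5 - 3N^2_5 + 7N^1_5 - 15)}{Q} \sum_{w \leqslant p_2 < p_1 < z} S(\mathcal{A}_{p_1p_2}, w) $$ $$ - \frac{6(N^2_5 - 6N^1_5 + 25)}{Q} \sum_{w \leqslant p_3 < p_2 < p_1 < z} S(\mathcal{A}_{p_1p_2p_3}, w) + \frac{24(N^1_5 - 10)}{Q} \sum_{w \leqslant p_4 < \cdots < p_1 < z} S(\mathcal{A}_{p_1p_2p_3p_4}, w) - \frac{120}{Q} \sum_{w \leqslant p_5 < \cdots < p_1 < z} S(\mathcal{A}_{p_1\cdots p_5}, w). $$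
   Context: Throughout, $p, p_1, p_2, \dots$ denote prime numbers. For a finite set $\mathcal{A}$ of positive integers and a positive integer $d$, $\mathcal{A}_d = \{a : ad \in \mathcal{A}\}$. For real $z$, $S(\mathcal{A}, z)$ denotes the number of $a \in \mathcal{A}$ having no prime factor less than $z$. Let $T = (0,1] \cup [2,3] \cup [4,5] \cup \cdots$, i.e. $T$ is the union of $(0,1]$ and the intervals $[k-1,k]$ over all odd integers $k \geqslant 3$, and let $\mathcal{U} = \{(x_1, x_2) : x_1, x_2 \in T,\ |x_1 - x_2| \leqslant 1\}$. *)

(* Defs.v *)
From mathcomp Require Import all_boot all_order all_algebra.
From mathcomp Require Import reals.
Set Implicit Arguments. Unset Strict Implicit. Unset Printing Implicit Defensive.
Import Order.TTheory GRing.Theory Num.Theory.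
Local Open Scope ring_scope.

(* A finite set of positive integers is represented by a duplicate-free
   sequence A of positive naturals. *)

Definition Asub (A : seq nat) (d : nat) : seq nat :=
  [seq (a %/ d)%N | a <- A & (d %| a)%N].

Definition Ssieve (R : realType) (A : seq nat) (z : R) : nat :=
  count (fun a => all (fun p => ~~ (prime p && (p%:R < z)) || ~~ (p %| a)%N)
                      (iota 0 a.+1)) A.

Definition primes_in (R : realType) (w z : R) : seq nat :=
  [seq p <- iota 0 (Num.truncn z).+1 | prime p && (w <= p%:R) && (p%:R < z)].

Definition inT (R : realType) (x : R) : Prop :=
  (0 < x <= 1) \/ exists k : nat, [/\ odd k, (3 <= k)%N & (k.-1)%:R <= x <= k%:R].

Definition inU (R : realType) (x1 x2 : R) : Prop :=
  inT x1 /\ inT x2 /\ `|x1 - x2| <= 1.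

Definition Nsym (R : realType) (ms : seq R) (r : nat) : R :=
  \sum_(I : {set 'I_(size ms)} | #|I| == r) \prod_(i in I) ms`_i.

(* Main.v *)
Require Import Defs.
From mathcomp Require Import all_boot all_order all_algebra.
From mathcomp Require Import reals.
From mathcomp Require Import ring lra zify.
Import Order.TTheory GRing.Theory Num.Theory.
Local Open Scope ring_scope.

Set Implicit Arguments. Unset Strict Implicit. Unset Printing Implicit Defensive.

Lemma hockey (q : pred nat) n b r :
  (\sum_(p <- filter q (iota 0 n) | (p < b)%N)
     'C(count (fun x => (x < p)%N) (filter q (iota 0 n)), r) =
   'C(count (fun x => (x < b)%N) (filter q (iota 0 n)), r.+1))%N.
Proof.
elim: n => [|n IH]; first by rewrite /= big_nil bin0n.
rewrite -addn1 iotaD /= filter_cat /=.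
case: (q n) => /=; last by rewrite cats0.
rewrite big_cat /= big_cons big_nil count_cat /= addn0.
set s := filter q (iota 0 n).
have Hs : forall x, x \in s -> (x < n)%N.
  by move=> x; rewrite mem_filter mem_iota => /andP[_ /andP[_ ]].
rewrite big_seq_cond (eq_bigr (fun p => 'C(count (fun x => (x < p)%N) s, r))); last first.
  move=> p /andP[Hp _]; rewrite count_cat /=.
  by have := Hs _ Hp => H; rewrite ltnNge (ltnW H) /= !addn0.
rewrite -big_seq_cond.
rewrite IH count_cat /= ltnn addn0.
have -> : count (fun x => (x < n)%N) s = size s.
  by rewrite -count_predT; apply: eq_in_count => x /Hs.
case: (ltnP n b) => Hnb /=; last by rewrite ?addn0 ?addn0.
rewrite -/s !addn0.
have -> : count (fun x => (x < b)%N) s = size s.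
  rewrite -count_predT; apply: eq_in_count => x /Hs Hx /=; by rewrite (ltn_trans Hx).
by rewrite addn1 binS addnC.
Qed.

Lemma hockey2 (q1 q2 : pred nat) n b r :
  (\sum_(p <- filter q1 (filter q2 (iota 0 n)) | (p < b)%N)
     'C(count (fun x => (x < p)%N) (filter q1 (filter q2 (iota 0 n))), r) =
   'C(count (fun x => (x < b)%N) (filter q1 (filter q2 (iota 0 n))), r.+1))%N.
Proof. by rewrite -filter_predI hockey. Qed.

Definition gd (R : realType) (w : R) (a : nat) : bool :=
  all (fun p => ~~ (prime p && (p%:R < w)) || ~~ (p %| a)%N) (iota 0 a.+1).

Lemma gdP (R : realType) (w : R) a : (0 < a)%N ->
  reflect (forall p, prime p -> (p %| a)%N -> w <= p%:R) (gd w a).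
Proof.
move=> a0; apply: (iffP allP) => H p.
  move=> Hp Hd; have : p \in iota 0 a.+1 by rewrite mem_iota add0n ltnS leq0n dvdn_leq.
  by move/H; rewrite Hp Hd /= orbF leNgt.
move=> _; case Hp: (prime p); case Hd: (p %| a)%N; rewrite ?orbT //=.
by rewrite -leNgt H.
Qed.

Lemma Ssieve_Asub (R : realType) A d (w : R) :
  Ssieve (Asub A d) w = count (fun a => (d %| a)%N && gd w (a %/ d)) A.
Proof.
rewrite /Ssieve /Asub count_map count_filter; apply: eq_count => a /=.
by rewrite andbC.
Qed.

Lemma count_sumR (R : realType) (T : Type) (P : pred T) s :
  (count P s)%:R = \sum_(x <- s) (P x)%:R :> R.
Proof.
by elim: s => [|x s IH]; rewrite ?big_nil ?big_cons //= natrD IH.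
Qed.

Definition hh (R : realType) (w : R) a d : R := ((d %| a)%N && gd w (a %/ d))%:R.

Definition PD (R : realType) (w : R) (b D : nat) :=
  forall q, prime q -> (q %| D)%N -> (b <= q)%N /\ w <= q%:R.

Lemma PD_mul (R : realType) (w : R) b D1 D2 : PD w b D1 -> PD w b D2 -> PD w b (D1 * D2).
Proof.
move=> H1 H2 q Hq; rewrite Euclid_dvdM // => /orP[]; [exact: H1|exact: H2].
Qed.

Lemma PD_prime (R : realType) (w : R) b p : prime p -> (b <= p)%N -> w <= p%:R -> PD w b p.
Proof.
by move=> Hp Hb Hw q Hq; rewrite dvdn_prime2 // => /eqP ->.
Qed.

Lemma PD_mono (R : realType) (w : R) b b' D : (b' <= b)%N -> PD w b D -> PD w b' D.
Proof.
move=> Hb H q Hq Hd; have [H1 H2] := H q Hq Hd; split=> //; exact: leq_trans H1.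
Qed.

Lemma PD_1 (R : realType) (w : R) b : PD w b 1.
Proof. by move=> q Hq; rewrite dvdn1 => /eqP Hq1; rewrite Hq1 in Hq. Qed.

Lemma hh_gd (R : realType) (w : R) a D : (0 < a)%N -> PD w 0 D ->
  ((D %| a)%N && gd w (a %/ D)) = (D %| a)%N && gd w a.
Proof.
move=> a0 HD; case Hd: (D %| a)%N => //=.
have D0 : (0 < D)%N by rewrite lt0n; apply/eqP => D0; move: Hd a0; rewrite D0 dvd0n => /eqP ->.
have aD0 : (0 < a %/ D)%N by rewrite divn_gt0 // dvdn_leq.
apply/(gdP w aD0)/(gdP w a0) => H p Hp Hpd.
  move: Hpd; rewrite -(divnK Hd) Euclid_dvdM // => /orP[Hx|Hx]; [exact: H | exact: (HD p Hp Hx).2].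
apply: H => //; rewrite -(divnK Hd) dvdn_mulr //.
Qed.

Lemma memP (R : realType) (w z : R) p :
  (p \in primes_in w z) = [&& prime p, w <= p%:R & p%:R < z].
Proof.
rewrite mem_filter mem_iota add0n leq0n /= -andbA.
case Hp: (prime p) => //=; case Hz: (p%:R < z); rewrite ?andbF ?andbT //.
have z0 : 0 <= z by apply: le_trans (ltW Hz).
have : ~~ (Num.truncn z < p)%N by rewrite truncn_lt_nat // -leNgt ltW.
by rewrite -leqNgt => H; rewrite ltnS H /= andbT.
Qed.

Lemma memP_lt (R : realType) (w z : R) p :
  p \in primes_in w z -> (p < (Num.truncn z).+1)%N.
Proof. by rewrite mem_filter mem_iota => /andP[_ /andP[]]. Qed.

Lemma hh_mul (R : realType) (w : R) a D p : (0 < a)%N -> PD w 0 D -> prime p ->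
  w <= p%:R -> coprime D p -> hh w a (D * p) = hh w a D * (p %| a)%N%:R.
Proof.
move=> a0 HD Hp Hw Hc.
rewrite /hh hh_gd // ?hh_gd //; last by apply: PD_mul => //; apply: PD_prime.
rewrite Gauss_dvd //.
by case: (D %| a)%N; case: (p %| a)%N; case: (gd w a); rewrite /= ?mulr1 ?mulr0.
Qed.

Section Step.
Variables (R : realType) (w z : R) (a : nat).
Hypothesis a0 : (0 < a)%N.
Let P := primes_in w z.
Let s := [seq p <- P | (p %| a)%N].
Let cnt b := count (fun x => (x < b)%N) s.

Lemma stepF (F : nat -> R) D b j : PD w b D ->
  (forall p, p \in P -> (p < b)%N -> F p = hh w a (D * p) * ('C(cnt p, j))%:R) ->
  \sum_(p <- P | (p < b)%N) F p = hh w a D * ('C(cnt b, j.+1))%:R.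
Proof.
move=> HD HF.
rewrite big_seq_cond (eq_bigr (fun p => hh w a D * ((p %| a)%N%:R * ('C(cnt p, j))%:R))); last first.
  move=> p /andP[Hp Hpb]; rewrite HF //.
  move: Hp; rewrite memP => /and3P[Hpr Hw _].
  rewrite hh_mul // ?mulrA //; first exact: PD_mono HD.
  rewrite coprime_sym prime_coprime //; apply/negP => /(HD p Hpr) [H _].
  by move: Hpb; rewrite ltnNge H.
rewrite -big_seq_cond -mulr_sumr; congr (_ * _).
transitivity (\sum_(p <- P | ((p %| a)%N && (p < b)%N)) ('C(cnt p, j))%:R : R).
  rewrite [RHS]big_mkcondl; apply: eq_bigr => p _.
  by case: (p %| a)%N; rewrite ?mul1r ?mul0r.
rewrite -big_filter_cond -natr_sum; congr (_%:R).
exact: hockey2.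
Qed.

Lemma outerM (F : nat -> R) :
  \sum_(p <- P) F p = \sum_(p <- P | (p < (Num.truncn z).+1)%N) F p.
Proof.
rewrite big_seq [RHS]big_seq_cond; apply: eq_bigl => p.
by case Hp: (p \in P); rewrite //= (memP_lt Hp).
Qed.

Lemma hh1 : hh w a 1 = (gd w a)%:R.
Proof. by rewrite /hh dvd1n divn1. Qed.

Lemma cntM : cnt (Num.truncn z).+1 = size s.
Proof.
rewrite /cnt -count_predT; apply: eq_in_count => x.
by rewrite mem_filter => /andP[_ /memP_lt ->].
Qed.

Lemma PDP p b : p \in P -> (b <= p)%N -> PD w b p.
Proof. by rewrite memP => /and3P[Hp Hw _] Hb; apply: PD_prime. Qed.

Lemma lvl1 : \sum_(p1 <- P) hh w a p1 = (gd w a)%:R * ('C(size s, 1))%:R.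
Proof.
rewrite outerM -hh1 -cntM.
apply: (stepF (D:=1)) => [|p1 H1 _]; first exact: PD_1.
by rewrite mul1n bin0 mulr1.
Qed.

Lemma lvl2 : \sum_(p1 <- P) \sum_(p2 <- P | (p2 < p1)%N) hh w a (p1 * p2)
  = (gd w a)%:R * ('C(size s, 2))%:R.
Proof.
rewrite outerM -hh1 -cntM.
apply: (stepF (D:=1)) => [|p1 H1 _]; first exact: PD_1.
rewrite mul1n; apply: stepF => [|p2 H2 H21]; first exact: PDP.
by rewrite bin0 mulr1.
Qed.

Lemma lvl3 : \sum_(p1 <- P) \sum_(p2 <- P | (p2 < p1)%N) \sum_(p3 <- P | (p3 < p2)%N)
   hh w a (p1 * p2 * p3)
  = (gd w a)%:R * ('C(size s, 3))%:R.
Proof.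
rewrite outerM -hh1 -cntM.
apply: (stepF (D:=1)) => [|p1 H1 _]; first exact: PD_1.
rewrite mul1n; apply: stepF => [|p2 H2 H21]; first exact: PDP.
apply: stepF => [|p3 H3 H32].
  by apply: PD_mul; apply: PDP => //; apply: ltnW.
by rewrite bin0 mulr1.
Qed.

Lemma lvl4 : \sum_(p1 <- P) \sum_(p2 <- P | (p2 < p1)%N) \sum_(p3 <- P | (p3 < p2)%N)
   \sum_(p4 <- P | (p4 < p3)%N) hh w a (p1 * p2 * p3 * p4)
  = (gd w a)%:R * ('C(size s, 4))%:R.
Proof.
rewrite outerM -hh1 -cntM.
apply: (stepF (D:=1)) => [|p1 H1 _]; first exact: PD_1.
rewrite mul1n; apply: stepF => [|p2 H2 H21]; first exact: PDP.
apply: stepF => [|p3 H3 H32].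
  by apply: PD_mul; apply: PDP => //; apply: ltnW.
apply: stepF => [|p4 H4 H43].
  apply: PD_mul; [apply: PD_mul|]; apply: PDP => //; apply: ltnW => //.
  exact: ltn_trans H21.
by rewrite bin0 mulr1.
Qed.

Lemma lvl5 : \sum_(p1 <- P) \sum_(p2 <- P | (p2 < p1)%N) \sum_(p3 <- P | (p3 < p2)%N)
   \sum_(p4 <- P | (p4 < p3)%N) \sum_(p5 <- P | (p5 < p4)%N)
   hh w a (p1 * p2 * p3 * p4 * p5)
  = (gd w a)%:R * ('C(size s, 5))%:R.
Proof.
rewrite outerM -hh1 -cntM.
apply: (stepF (D:=1)) => [|p1 H1 _]; first exact: PD_1.
rewrite mul1n; apply: stepF => [|p2 H2 H21]; first exact: PDP.
apply: stepF => [|p3 H3 H32].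
  by apply: PD_mul; apply: PDP => //; apply: ltnW.
apply: stepF => [|p4 H4 H43].
  apply: PD_mul; [apply: PD_mul|]; apply: PDP => //; apply: ltnW => //.
  exact: ltn_trans H21.
apply: stepF => [|p5 H5 H54].
  by apply: PD_mul; [apply: PD_mul; [apply: PD_mul|]|]; apply: PDP => //; apply: ltnW; lia.
by rewrite bin0 mulr1.
Qed.

End Step.
Lemma natrS' (R : realType) k : (k.+1)%:R = k%:R + 1 :> R.
Proof. by rewrite -addn1 natrD. Qed.

Lemma bin2R (R : realType) k : ('C(k, 2))%:R * 2 = k%:R * (k%:R - 1) :> R.
Proof.
elim: k => [|k IH]; first by rewrite bin_small // !mul0r.
rewrite binS natrD mulrDl IH bin1 (natrS' R k); ring.
Qed.

Lemma bin3R (R : realType) k : ('C(k, 3))%:R * 6 = k%:R * (k%:R - 1) * (k%:R - 2) :> R.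
Proof.
elim: k => [|k IH]; first by rewrite bin_small // !mul0r.
have H2 := bin2R R k.
rewrite binS natrD mulrDl IH (natrS' R k).
have E : ('C(k, 2))%:R = ('C(k, 2))%:R * 2 / 2 :> R by field; rewrite //=.
by rewrite E H2; field.
Qed.

Lemma bin4R (R : realType) k : ('C(k, 4))%:R * 24 = k%:R * (k%:R - 1) * (k%:R - 2) * (k%:R - 3) :> R.
Proof.
elim: k => [|k IH]; first by rewrite bin_small // !mul0r.
have H3 := bin3R R k.
rewrite binS natrD mulrDl IH (natrS' R k).
have E : ('C(k, 3))%:R = ('C(k, 3))%:R * 6 / 6 :> R by field; rewrite //=.
by rewrite E H3; field.
Qed.

Lemma bin5R (R : realType) k : ('C(k, 5))%:R * 120 = k%:R * (k%:R - 1) * (k%:R - 2) * (k%:R - 3) * (k%:R - 4) :> R.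
Proof.
elim: k => [|k IH]; first by rewrite bin_small // !mul0r.
have H4 := bin4R R k.
rewrite binS natrD mulrDl IH (natrS' R k).
have E : ('C(k, 4))%:R = ('C(k, 4))%:R * 24 / 24 :> R by field; rewrite //=.
by rewrite E H4; field.
Qed.

Lemma T_pos (R : realType) (x : R) : inT x -> 0 < x.
Proof.
case=> [/andP[] //|[j [_ Hj /andP[H _]]]].
apply: lt_le_trans H; rewrite ltr0n; lia.
Qed.

Lemma noSplit (R : realType) (x1 x2 : R) k : inT x1 -> inT x2 -> x2 - x1 <= 1 ->
  x1 < k%:R -> k%:R < x2 -> (1 <= k)%N -> False.
Proof.
move=> T1 T2 Hd H1 H2 Hk.
have Hk1 : (1%:R <= k%:R :> R) by rewrite ler_nat.
have oddk : odd k.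
  case: T1 => [/andP[_ Hx1]|[j [oj Hj /andP[Hj1 Hj2]]]].
    have : (k < 2)%N by rewrite -(ltr_nat R); lra.
    by case: k Hk {Hk1 H1 H2} => [|[|]].
  have Hj' : (j.-1).+1 = j by lia.
  have e1 : (j.-1 < k)%N by rewrite -(ltr_nat R); lra.
  have e2 : (k < j.+1)%N by rewrite -(ltr_nat R) natrS'; lra.
  have -> : k = j by lia.
  exact: oj.
case: T2 => [/andP[_ Hx2]|[j [oj Hj /andP[Hj1 Hj2]]]].
  by move: Hk1; lra.
have e1 : (k < j)%N by rewrite -(ltr_nat R); lra.
have e2 : (j.-1 < k.+1)%N by rewrite -(ltr_nat R) natrS'; lra.
have ej : j = k.+1 by lia.
by move: oj; rewrite ej /= oddk.
Qed.

Lemma U_nonneg (R : realType) (x1 x2 : R) k : inU x1 x2 -> (1 <= k)%N ->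
  0 <= (x1 - k%:R) * (x2 - k%:R).
Proof.
move=> [T1 [T2 Hd]] Hk.
have [H1|H1] := leP x1 k%:R; have [H2|H2] := leP x2 k%:R.
- nra.
- case: (ltP x1 k%:R) => H1'.
    exfalso; apply: (noSplit T1 T2 _ H1' H2 Hk).
    by move: Hd; rewrite ler_norml; lra.
  have -> : x1 = k%:R by apply/eqP; rewrite eq_le H1 H1'.
  by rewrite subrr mul0r.
- case: (ltP x2 k%:R) => H2'.
    exfalso; apply: (noSplit T2 T1 _ H2' H1 Hk).
    by move: Hd; rewrite ler_norml; lra.
  have -> : x2 = k%:R by apply/eqP; rewrite eq_le H2 H2'.
  by rewrite subrr mulr0.
- nra.
Qed.
Lemma prod_Nsym (R : realType) (ms : seq R) y :
  \prod_(i < size ms) (ms`_i + y) =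
  \sum_(r < (size ms).+1) Nsym ms r * y ^+ (size ms - r).
Proof.
set n := size ms.
rewrite bigA_distr.
transitivity (\sum_(J : {set 'I_n}) (\prod_(i in J) ms`_i) * y ^+ (n - #|J|)).
  apply: eq_bigr => J _.
  rewrite (bigID (mem J)) /=; congr (_ * _).
    by apply: eq_bigr => i ->.
  rewrite (eq_bigr (fun _ => y)); last by move=> i /negbTE ->.
  rewrite prodr_const; congr (_ ^+ _).
  move: (cardC (mem J)) (card_ord n) => H1 H2.
  have E1 : #|(fun i : 'I_n => i \notin J)| = #|[predC mem J]| by apply: eq_card => i; rewrite !inE.
  have H3 : (#|J| + #|[predC mem J]| = n)%N := etrans H1 H2.
  rewrite E1; move: H3; move: #|J| #|[predC mem J]| => u v; lia.
rewrite (partition_big (fun J : {set 'I_n} => (inord #|J| : 'I_n.+1)) xpredT) //=.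
apply: eq_bigr => r _.
rewrite /Nsym mulr_suml.
have Hle : forall J : {set 'I_n}, (#|J| <= n)%N.
  by move=> J; rewrite -[X in (_ <= X)%N]card_ord max_card.
apply: eq_big => [J|J /eqP HJ].
  by rewrite -val_eqE /= inordK // ltnS Hle.
have HJ' : #|J| = r by rewrite -HJ inordK // ltnS Hle.
by rewrite HJ'.
Qed.

Lemma Nsym0 (R : realType) (ms : seq R) : Nsym ms 0 = 1.
Proof.
rewrite /Nsym (eq_bigl (fun I => I == set0)) => [|I]; last exact: cards_eq0.
by rewrite big_pred1_eq big_set0.
Qed.

Lemma poly5 (R : realType) (m0 m1 m2 m3 m4 x : R) :
  let ms := [:: m0; m1; m2; m3; m4] in
  (m0 - x) * (m1 - x) * (m2 - x) * (m3 - x) * (m4 - x) =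
  m0 * m1 * m2 * m3 * m4 - Nsym ms 4 * x + Nsym ms 3 * x ^+ 2 - Nsym ms 2 * x ^+ 3
  + Nsym ms 1 * x ^+ 4 - x ^+ 5.
Proof.
move=> ms.
have H := prod_Nsym ms (- x).
have H0 := prod_Nsym ms 0.
rewrite !big_ord_recr big_ord0 /= in H H0.
rewrite Nsym0 in H H0.
rewrite !expr0n /= !big_ord0 in H0.
rewrite !big_ord0 in H.
have E5 : Nsym ms 5 = m0 * m1 * m2 * m3 * m4.
  by move: H0; rewrite !addr0 !mulr0 !add0r !mul1r !mulr1.
rewrite E5 in H.
rewrite (_ : (5 - 0 = 5)%N) // (_ : (5 - 1 = 4)%N) // (_ : (5 - 2 = 3)%N) //
  (_ : (5 - 3 = 2)%N) // (_ : (5 - 4 = 1)%N) // (_ : (5 - 5 = 0)%N) // in H.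
rewrite mul1r in H; rewrite H; ring.
Qed.
Lemma per_a (R : realType) (m0 m1 m2 m3 m4 : R) (k : nat) (G L : bool) :
  0 < m0 <= 1 -> inU m1 m2 -> inU m3 m4 -> (G -> k = 0%N -> L) ->
  let ms := [:: m0; m1; m2; m3; m4] in
  let N1 := Nsym ms 1 in let N2 := Nsym ms 2 in
  let N3 := Nsym ms 3 in let N4 := Nsym ms 4 in
  let Q := m0 * m1 * m2 * m3 * m4 in
  G%:R - (N4 - N3 + N2 - N1 + 1) / Q * (G%:R * ('C(k, 1))%:R)
    + 2 * (N3 - 3 * N2 + 7 * N1 - 15) / Q * (G%:R * ('C(k, 2))%:R)
    - 6 * (N2 - 6 * N1 + 25) / Q * (G%:R * ('C(k, 3))%:R)
    + 24 * (N1 - 10) / Q * (G%:R * ('C(k, 4))%:R)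
    - 120 / Q * (G%:R * ('C(k, 5))%:R) <= L%:R.
Proof.
move=> /andP[m00 m01] U12 U34 HGL; cbv zeta.
set ms := [:: m0; m1; m2; m3; m4]; set N1 := Nsym ms 1; set N2 := Nsym ms 2; set N3 := Nsym ms 3; set N4 := Nsym ms 4; set Q := m0 * m1 * m2 * m3 * m4.
case: G HGL => /= HGL; last first.
  by rewrite !mul0r !mulr0 !subr0 !addr0 ler0n.
case: k HGL => [|k] HGL.
  by rewrite HGL // !bin_small // !mulr0 !subr0 !addr0.
have Hk : (1 <= k.+1)%N by [].
set x := (k.+1)%:R : R.
have Q0 : 0 < Q.
  case: U12 => [T1 [T2 _]]; case: U34 => [T3 [T4 _]].
  rewrite /Q; repeat apply: mulr_gt0 => //; exact: T_pos.
have e2 : ('C(k.+1, 2))%:R = x * (x - 1) / 2 :> R by rewrite -bin2R; field.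
have e3 : ('C(k.+1, 3))%:R = x * (x - 1) * (x - 2) / 6 :> R by rewrite -bin3R; field.
have e4 : ('C(k.+1, 4))%:R = x * (x - 1) * (x - 2) * (x - 3) / 24 :> R by rewrite -bin4R; field.
have e5 : ('C(k.+1, 5))%:R = x * (x - 1) * (x - 2) * (x - 3) * (x - 4) / 120 :> R by rewrite -bin5R; field.
rewrite e2 e3 e4 e5 bin1 -/x !mul1r.
have -> : 1 - (N4 - N3 + N2 - N1 + 1) / Q * x +
  2 * (N3 - 3 * N2 + 7 * N1 - 15) / Q * (x * (x - 1) / 2) -
  6 * (N2 - 6 * N1 + 25) / Q * (x * (x - 1) * (x - 2) / 6) +
  24 * (N1 - 10) / Q * (x * (x - 1) * (x - 2) * (x - 3) / 24) -
  120 / Q * (x * (x - 1) * (x - 2) * (x - 3) * (x - 4) / 120) =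
  ((m0 - x) * (m1 - x) * (m2 - x) * (m3 - x) * (m4 - x)) / Q.
  rewrite poly5 -/ms -/N1 -/N2 -/N3 -/N4 -/Q.
  by field; rewrite gt_eqF.
apply: (le_trans (y := 0)); last exact: ler0n.
rewrite (_ : (m0 - x) * (m1 - x) * (m2 - x) * (m3 - x) * (m4 - x)
   = (m0 - x) * ((m1 - x) * (m2 - x)) * ((m3 - x) * (m4 - x))); last by ring.
apply: mulr_le0_ge0; last by rewrite invr_ge0 ltW.
apply: mulr_le0_ge0; last exact: U_nonneg.
apply: mulr_le0_ge0; last exact: U_nonneg.
rewrite subr_le0 (le_trans m01) // /x ler1n //.
Qed.

Lemma combine (R : realType) (T : eqType) (s : seq T) (L G X1 X2 X3 X4 X5 : T -> R)
  (c1 c2 c3 c4 c5 : R) :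
  (forall x, x \in s -> G x - c1 * X1 x + c2 * X2 x - c3 * X3 x + c4 * X4 x - c5 * X5 x <= L x) ->
  \sum_(x <- s) G x - c1 * \sum_(x <- s) X1 x + c2 * \sum_(x <- s) X2 x
   - c3 * \sum_(x <- s) X3 x + c4 * \sum_(x <- s) X4 x - c5 * \sum_(x <- s) X5 x
   <= \sum_(x <- s) L x.
Proof.
move=> H.
rewrite !mulr_sumr -sumrB -big_split -sumrB -big_split -sumrB.
rewrite [leRHS]big_seq [leLHS]big_seq; apply: ler_sum => x Hx /=.
exact: H.
Qed.

Lemma SA (R : realType) (w : R) A d :
  (Ssieve (Asub A d) w)%:R = \sum_(a <- A) hh w a d :> R.
Proof. by rewrite Ssieve_Asub count_sumR. Qed.

Lemma gd_z (R : realType) (w z : R) a : (0 < a)%N -> gd w a ->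
  size [seq p <- primes_in w z | (p %| a)%N] = 0%N -> gd z a.
Proof.
move=> a0 Hw Hs; apply/(gdP z a0) => p Hp Hpa.
have Hwp := (gdP w a0 Hw) p Hp Hpa.
rewrite leNgt; apply/negP => Hpz.
have : p \in [seq p <- primes_in w z | (p %| a)%N] by rewrite mem_filter Hpa memP Hp Hwp Hpz.
by move/size0nil: Hs => ->.
Qed.

Unset Implicit Arguments.
Set Strict Implicit.

Theorem theorem6 (R : realType) (A : seq nat) (w z m0 m1 m2 m3 m4 : R) :
  uniq A -> all (fun a => (0 < a)%N) A ->
  w <= z -> 0 < m0 <= 1 -> inU m1 m2 -> inU m3 m4 ->
  let ms := [:: m0; m1; m2; m3; m4] in
  let N1 := Nsym ms 1 in let N2 := Nsym ms 2 in
  let N3 := Nsym ms 3 in let N4 := Nsym ms 4 in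
  let Q := m0 * m1 * m2 * m3 * m4 in
  let P := primes_in w z in
  (Ssieve (A : seq nat) z)%:R >=
    (Ssieve A w)%:R
    - (N4 - N3 + N2 - N1 + 1) / Q *
        \sum_(p1 <- P) (Ssieve (Asub A p1) w)%:R
    + 2 * (N3 - 3 * N2 + 7 * N1 - 15) / Q *
        \sum_(p1 <- P) \sum_(p2 <- P | (p2 < p1)%N)
          (Ssieve (Asub A (p1 * p2)) w)%:R
    - 6 * (N2 - 6 * N1 + 25) / Q *
        \sum_(p1 <- P) \sum_(p2 <- P | (p2 < p1)%N) \sum_(p3 <- P | (p3 < p2)%N)
          (Ssieve (Asub A (p1 * p2 * p3)) w)%:R
    + 24 * (N1 - 10) / Q *
        \sum_(p1 <- P) \sum_(p2 <- P | (p2 < p1)%N) \sum_(p3 <- P | (p3 < p2)%N)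
        \sum_(p4 <- P | (p4 < p3)%N)
          (Ssieve (Asub A (p1 * p2 * p3 * p4)) w)%:R
    - 120 / Q *
        \sum_(p1 <- P) \sum_(p2 <- P | (p2 < p1)%N) \sum_(p3 <- P | (p3 < p2)%N)
        \sum_(p4 <- P | (p4 < p3)%N) \sum_(p5 <- P | (p5 < p4)%N)
          (Ssieve (Asub A (p1 * p2 * p3 * p4 * p5)) w)%:R.
Proof.
move=> uA posA wz m0H U12 U34; cbv zeta.
set P := primes_in w z.
set k := fun a => size [seq p <- P | (p %| a)%N].
have pos : forall a, a \in A -> (0 < a)%N by move=> a; move/allP: posA; apply.
have L1 : \sum_(p1 <- P) (Ssieve (Asub A p1) w)%:R
   = \sum_(a <- A) (gd w a)%:R * ('C(k a, 1))%:R :> R.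
  transitivity (\sum_(p1 <- P) \sum_(a <- A) hh w a p1).
    by apply: eq_bigr => p1 _; apply: SA.
  rewrite exchange_big big_seq [RHS]big_seq; apply: eq_bigr => a Ha.
  exact: lvl1 (pos a Ha).
have L2 : \sum_(p1 <- P) \sum_(p2 <- P | (p2 < p1)%N) (Ssieve (Asub A (p1 * p2)) w)%:R
   = \sum_(a <- A) (gd w a)%:R * ('C(k a, 2))%:R :> R.
  transitivity (\sum_(p1 <- P) \sum_(p2 <- P | (p2 < p1)%N) \sum_(a <- A) hh w a (p1 * p2)).
    by apply: eq_bigr => p1 _; apply: eq_bigr => p2 _; apply: SA.
  under eq_bigr => p1 _ do rewrite exchange_big.
  rewrite exchange_big big_seq [RHS]big_seq; apply: eq_bigr => a Ha.
  exact: lvl2 (pos a Ha).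
have L3 : \sum_(p1 <- P) \sum_(p2 <- P | (p2 < p1)%N) \sum_(p3 <- P | (p3 < p2)%N)
     (Ssieve (Asub A (p1 * p2 * p3)) w)%:R
   = \sum_(a <- A) (gd w a)%:R * ('C(k a, 3))%:R :> R.
  transitivity (\sum_(p1 <- P) \sum_(p2 <- P | (p2 < p1)%N) \sum_(p3 <- P | (p3 < p2)%N)
     \sum_(a <- A) hh w a (p1 * p2 * p3)).
    by apply: eq_bigr => p1 _; apply: eq_bigr => p2 _; apply: eq_bigr => p3 _; apply: SA.
  under eq_bigr => p1 _ do under eq_bigr => p2 _ do rewrite exchange_big.
  under eq_bigr => p1 _ do rewrite exchange_big.
  rewrite exchange_big big_seq [RHS]big_seq; apply: eq_bigr => a Ha.
  exact: lvl3 (pos a Ha).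
have L4 : \sum_(p1 <- P) \sum_(p2 <- P | (p2 < p1)%N) \sum_(p3 <- P | (p3 < p2)%N)
     \sum_(p4 <- P | (p4 < p3)%N) (Ssieve (Asub A (p1 * p2 * p3 * p4)) w)%:R
   = \sum_(a <- A) (gd w a)%:R * ('C(k a, 4))%:R :> R.
  transitivity (\sum_(p1 <- P) \sum_(p2 <- P | (p2 < p1)%N) \sum_(p3 <- P | (p3 < p2)%N)
     \sum_(p4 <- P | (p4 < p3)%N) \sum_(a <- A) hh w a (p1 * p2 * p3 * p4)).
    by apply: eq_bigr => p1 _; apply: eq_bigr => p2 _; apply: eq_bigr => p3 _;
       apply: eq_bigr => p4 _; apply: SA.
  under eq_bigr => p1 _ do under eq_bigr => p2 _ do under eq_bigr => p3 _ do rewrite exchange_big.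
  under eq_bigr => p1 _ do under eq_bigr => p2 _ do rewrite exchange_big.
  under eq_bigr => p1 _ do rewrite exchange_big.
  rewrite exchange_big big_seq [RHS]big_seq; apply: eq_bigr => a Ha.
  exact: lvl4 (pos a Ha).
have L5 : \sum_(p1 <- P) \sum_(p2 <- P | (p2 < p1)%N) \sum_(p3 <- P | (p3 < p2)%N)
     \sum_(p4 <- P | (p4 < p3)%N) \sum_(p5 <- P | (p5 < p4)%N)
     (Ssieve (Asub A (p1 * p2 * p3 * p4 * p5)) w)%:R
   = \sum_(a <- A) (gd w a)%:R * ('C(k a, 5))%:R :> R.
  transitivity (\sum_(p1 <- P) \sum_(p2 <- P | (p2 < p1)%N) \sum_(p3 <- P | (p3 < p2)%N)
     \sum_(p4 <- P | (p4 < p3)%N) \sum_(p5 <- P | (p5 < p4)%N)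
     \sum_(a <- A) hh w a (p1 * p2 * p3 * p4 * p5)).
    by apply: eq_bigr => p1 _; apply: eq_bigr => p2 _; apply: eq_bigr => p3 _;
       apply: eq_bigr => p4 _; apply: eq_bigr => p5 _; apply: SA.
  under eq_bigr => p1 _ do under eq_bigr => p2 _ do under eq_bigr => p3 _ do
    under eq_bigr => p4 _ do rewrite exchange_big.
  under eq_bigr => p1 _ do under eq_bigr => p2 _ do under eq_bigr => p3 _ do rewrite exchange_big.
  under eq_bigr => p1 _ do under eq_bigr => p2 _ do rewrite exchange_big.
  under eq_bigr => p1 _ do rewrite exchange_big.
  rewrite exchange_big big_seq [RHS]big_seq; apply: eq_bigr => a Ha.
  exact: lvl5 (pos a Ha).
rewrite L1 L2 L3 L4 L5.
rewrite -[Ssieve A z]/(count (gd z) A) -[Ssieve A w]/(count (gd w) A) !count_sumR.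
apply: combine => a Ha.
apply: per_a => // HG Hk.
exact: gd_z (pos a Ha) HG Hk.
Qed.
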